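(* Let $\alpha\in(0,1/2)$ be irrational and let $q_k$ ($k\ge0$) be a denominator of a convergent of $\alpha$. Then there exists a factor of slope $\alpha$ whose minimum abelian period equals $q_k$.
   Context: Write $\alpha=[0;a_1,a_2,\ldots]$ with positive integers $a_i$ (so $a_1\ge2$); $q_{-1}=0$, $q_0=1$, $q_1=a_1$, $q_k=a_kq_{k-1}+q_{k-2}$ for $k\ge2$. Sturmian words: identify the circle $\mathbb{T}$ with $[0,1)$, let $R(\rho)=\{\rho+\alpha\}$, and fix one of the conventions $I_0=[0,1-\alpha)$, $I_1=[1-\alpha,1)$ or $I_0=(0,1-\alpha]$, $I_1=(1-\alpha,1]$. The Sturmian word $\mathbf{s}_{\rho,\alpha}$ has $n$-th letter $0$ if $R^n(\rho)\in I_0$ and $1$ otherwise. All these words have the same set $\mathcal{L}_\alpha$ of finite factors, the factors of slope $\alpha$. Abelian periods: the Parikh vector of a binary word $u$ is $(|u|_0,|u|_1)$; $P$ is contained in $Q$ if $P\le Q$ componentwise and $P\ne Q$. An abelian decomposition of $w$ is $w=u_0u_1\cdots u_{n-1}u_n$, $n\ge2$, with $u_1,\dots,u_{n-1}$ having a common Parikh vector $P$ and the Parikh vectors of $u_0,u_n$ contained in $P$; the common length of $u_1,\ldots,u_{n-1}$ is an abelian period; the minimum abelian period is the least one. *)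

(* Defs.v *)
From Stdlib Require Import Reals ZArith.
From mathcomp Require Import all_boot.

Set Implicit Arguments.
Unset Strict Implicit.
Unset Printing Implicit Defensive.

Fixpoint cf_rem (alpha : R) (n : nat) : R :=
  match n with
  | 0 => alpha
  | n'.+1 => frac_part (/ cf_rem alpha n')
  end.

Definition cf_a (alpha : R) (n : nat) : nat :=
  match n with
  | 0 => 0
  | n'.+1 => Z.to_nat (Int_part (/ cf_rem alpha n'))
  end.

(* cf_qpair alpha k = (q_{k-1}, q_k), with q_{-1} = 0, q_0 = 1,
   q_k = a_k q_{k-1} + q_{k-2}  (so q_1 = a_1). *)
Fixpoint cf_qpair (alpha : R) (k : nat) : nat * nat :=
  match k with
  | 0 => (0, 1)
  | k'.+1 => let p := cf_qpair alpha k' in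
             (p.2, cf_a alpha k * p.2 + p.1)
  end.

Definition cf_q (alpha : R) (k : nat) : nat := (cf_qpair alpha k).2.

(* Letters: false = 0, true = 1.  R^n(rho) = {rho + n alpha}.
   Convention c = true  : I_0 = [0, 1 - alpha), I_1 = [1 - alpha, 1).
   Convention c = false : I_0 = (0, 1 - alpha], I_1 = (1 - alpha, 1]
   (the point 0 of [0,1) is the point 1 of the circle, in I_1). *)
Definition sturmian (c : bool) (rho alpha : R) (n : nat) : bool :=
  let x := frac_part (rho + INR n * alpha) in
  if c then
    (if Rlt_dec x (1 - alpha) then false else true)
  else
    (if Rlt_dec 0 x then (if Rle_dec x (1 - alpha) then false else true)
     else true).

Definition factor_of_slope (alpha : R) (w : seq bool) : Prop :=
  exists (c : bool) (rho : R) (i : nat),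
    Rle 0 rho /\ Rlt rho 1 /\
    w = mkseq (fun j => sturmian c rho alpha (i + j)) (size w).

Definition parikh (u : seq bool) : nat * nat :=
  (count negb u, count id u).

Definition parikh_contained (P Q : nat * nat) : Prop :=
  P.1 <= Q.1 /\ P.2 <= Q.2 /\ P <> Q.

(* p is an abelian period of w: w = u_0 u_1 ... u_{n-1} u_n, n >= 2,
   u_1..u_{n-1} (the list us, nonempty) share Parikh vector P, the Parikh
   vectors of u_0 and u_n are contained in P, and p = |u_1|. *)
Definition abelian_period (w : seq bool) (p : nat) : Prop :=
  exists (u0 : seq bool) (us : seq (seq bool)) (un : seq bool) (P : nat * nat),
    us <> [::] /\
    w = u0 ++ flatten us ++ un /\
    (forall u, u \in us -> parikh u = P) /\
    parikh_contained (parikh u0) P /\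
    parikh_contained (parikh un) P /\
    p = P.1 + P.2.

Definition min_abelian_period (w : seq bool) (p : nat) : Prop :=
  abelian_period w p /\ forall p', abelian_period w p' -> p <= p'.

Definition irrational (x : R) : Prop :=
  forall (m n : Z), n <> 0%Z -> x <> Rdiv (IZR m) (IZR n).

(* Main.v *)
Require Import Defs.
From Stdlib Require Import Reals ZArith Lra Lia Psatz.
From mathcomp Require Import all_boot.
From mathcomp Require Import zify.

Module CFm.

Set Implicit Arguments.
Unset Strict Implicit.
Unset Printing Implicit Defensive.

Fixpoint cf_ppair (alpha : R) (k : nat) : nat * nat :=
  match k with
  | 0 => (1, 0)
  | k'.+1 => let p := cf_ppair alpha k' in (p.2, cf_a alpha k * p.2 + p.1)
  end.

Fixpoint Bt (alpha : R) (n : nat) : R :=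
  match n with 0 => R1 | n'.+1 => Rmult (Bt alpha n') (cf_rem alpha n') end.

Lemma qpairS alpha n : cf_qpair alpha n.+1 =
  ((cf_qpair alpha n).2, cf_a alpha n.+1 * (cf_qpair alpha n).2 + (cf_qpair alpha n).1).
Proof. by []. Qed.
Lemma ppairS alpha n : cf_ppair alpha n.+1 =
  ((cf_ppair alpha n).2, cf_a alpha n.+1 * (cf_ppair alpha n).2 + (cf_ppair alpha n).1).
Proof. by []. Qed.
Lemma q2S alpha n : (cf_qpair alpha n.+1).2 = cf_a alpha n.+1 * (cf_qpair alpha n).2 + (cf_qpair alpha n).1.
Proof. by []. Qed.
Lemma q1S alpha n : (cf_qpair alpha n.+1).1 = (cf_qpair alpha n).2.
Proof. by []. Qed.
Lemma p2S alpha n : (cf_ppair alpha n.+1).2 = cf_a alpha n.+1 * (cf_ppair alpha n).2 + (cf_ppair alpha n).1.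
Proof. by []. Qed.
Lemma p1S alpha n : (cf_ppair alpha n.+1).1 = (cf_ppair alpha n).2.
Proof. by []. Qed.
Lemma powS1 n : pow (-1) n.+1 = Ropp (pow (-1) n).
Proof. rewrite /=. ring. Qed.
Lemma BtS alpha n : Bt alpha n.+1 = Rmult (Bt alpha n) (cf_rem alpha n).
Proof. by []. Qed.
Lemma remS alpha n : cf_rem alpha n.+1 = frac_part (/ cf_rem alpha n).
Proof. by []. Qed.

Lemma INR_addn m n : INR (m + n) = Rplus (INR m) (INR n).
Proof. by rewrite -plusE plus_INR. Qed.
Lemma INR_muln m n : INR (m * n) = Rmult (INR m) (INR n).
Proof. by rewrite -multE mult_INR. Qed.

Local Open Scope R_scope.

Lemma IntP_spec r z : IZR z <= r < IZR z + 1 -> Int_part r = z.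
Proof.
move=> [h1 h2]. rewrite /Int_part.
have h := tech_up r (z+1). rewrite plus_IZR in h.
rewrite -h; [lia| lra | lra].
Qed.

Lemma Int_part_nonneg r : 0 <= r -> (0 <= Int_part r)%Z.
Proof.
move=> h. have [h1 h2] := base_Int_part r.
have : IZR (-1) < IZR (Int_part r) by rewrite /=; lra.
move/lt_IZR. lia.
Qed.

Section CF.
Variable alpha : R.
Hypothesis a0 : 0 < alpha.
Hypothesis a1 : alpha < 1/2.
Hypothesis airr : irrational alpha.

Lemma rem_lt1 n : cf_rem alpha n < 1.
Proof. case: n => [/=|n]; first lra. rewrite remS. by have [_ ?] := base_fp (/ cf_rem alpha n). Qed.

Lemma rem_ge0 n : 0 <= cf_rem alpha n.
Proof. case: n => [/=|n]; first lra. rewrite remS. by have [? _] := base_fp (/ cf_rem alpha n); lra. Qed.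

Lemma a_INR n : 0 < cf_rem alpha n ->
  INR (cf_a alpha n.+1) = / cf_rem alpha n - cf_rem alpha n.+1.
Proof.
move=> h. rewrite remS /frac_part /cf_a.
rewrite INR_IZR_INZ Z2Nat.id; first lra.
apply: Int_part_nonneg. left; by apply: Rinv_0_lt_compat.
Qed.

Lemma a_ge1 n : 0 < cf_rem alpha n -> (1 <= cf_a alpha n.+1)%nat.
Proof.
move=> h. have ha := a_INR h. have h1 := rem_lt1 n. have h2 := rem_lt1 n.+1.
have : 1 < / cf_rem alpha n.
  rewrite -Rinv_1. apply: Rinv_lt_contravar; lra.
move=> hi. have hh : INR 0 < INR (cf_a alpha n.+1) by change (INR 0) with 0; lra.
have := INR_lt _ _ hh. lia.
Qed.

Lemma a1_ge2 : (2 <= cf_a alpha 1)%nat.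
Proof.
have ha := a_INR (n:=0) a0. have h2 := rem_lt1 1. change (cf_rem alpha 0) with alpha in ha.
have : 2 < / alpha.
  have -> : 2 = / (1/2) by field. apply: Rinv_lt_contravar; lra.
move=> hi. have hh : INR 1 < INR (cf_a alpha 1) by change (INR 1) with 1; lra.
have := INR_lt _ _ hh. lia.
Qed.

Lemma ident n : (forall i, (i < n)%nat -> 0 < cf_rem alpha i) ->
  INR (cf_qpair alpha n).2 * alpha - INR (cf_ppair alpha n).2 = (-1)^n * Bt alpha n.+1 /\
  INR (cf_qpair alpha n).1 * alpha - INR (cf_ppair alpha n).1 = - (-1)^n * Bt alpha n.
Proof.
elim: n => [|n IH] H.
  rewrite /=. split; lra.
have [IH1 IH2] := IH (fun i hi => H i (ltnW hi)).
rewrite q2S q1S p2S p1S !powS1. split; last by rewrite IH1; lra.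
rewrite !INR_addn !INR_muln.
have hx := H n (ltnSn n).
have -> : (INR (cf_a alpha n.+1) * INR (cf_qpair alpha n).2 + INR (cf_qpair alpha n).1) * alpha -
  (INR (cf_a alpha n.+1) * INR (cf_ppair alpha n).2 + INR (cf_ppair alpha n).1) =
  INR (cf_a alpha n.+1) * (INR (cf_qpair alpha n).2 * alpha - INR (cf_ppair alpha n).2) +
  (INR (cf_qpair alpha n).1 * alpha - INR (cf_ppair alpha n).1) by ring.
rewrite IH1 IH2 (a_INR hx) !BtS.
field. lra.
Qed.

Lemma q_pos n : (1 <= (cf_qpair alpha n).2)%nat /\ (1 <= n -> 1 <= (cf_qpair alpha n).1)%nat.
Proof.
elim: n => [|n [IH1 IH2]]; first by [].
rewrite qpairS /=. split; last by move=> _.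
case: n IH1 IH2 => [|n] IH1 IH2.
  have := a1_ge2. rewrite /=. lia.
have := IH2 isT. lia.
Qed.

Lemma xpos n : 0 < cf_rem alpha n.
Proof.
suff : forall i, (i <= n)%nat -> 0 < cf_rem alpha i by apply.
elim: n => [|n IH] i hi.
  have -> : i = 0%nat by lia. by [].
case: (leqP i n) => hin; first by apply: IH.
have -> : i = n.+1 by lia.
case: (rem_ge0 n.+1) => // h0.
exfalso.
have [h1 _] := ident (n:=n.+1) (fun j hj => IH j hj).
rewrite BtS -h0 Rmult_0_r Rmult_0_r in h1.
have [hq _] := q_pos n.+1.
apply: (airr (m := Z.of_nat (cf_ppair alpha n.+1).2) (n := Z.of_nat (cf_qpair alpha n.+1).2)).
  lia.
rewrite -!INR_IZR_INZ.
have hq' : INR (cf_qpair alpha n.+1).2 <> 0.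
  have : INR 0 < INR (cf_qpair alpha n.+1).2 by apply: lt_INR; lia.
  rewrite /=; lra.
field_simplify_eq; last by [].
lra.
Qed.

Lemma Bt_pos n : 0 < Bt alpha n.
Proof. elim: n => [/=|n IH]; first lra. rewrite BtS. have := xpos n. nra. Qed.

Lemma Bt_dec n : Bt alpha n.+1 < Bt alpha n.
Proof. rewrite BtS. have := Bt_pos n. have := rem_lt1 n. nra. Qed.

Lemma identI n : INR (cf_qpair alpha n).2 * Bt alpha n + INR (cf_qpair alpha n).1 * Bt alpha n.+1 = 1.
Proof.
elim: n => [|n IH]; first by rewrite /=; lra.
rewrite q2S q1S !INR_addn !INR_muln.
rewrite (a_INR (xpos n)) !BtS. rewrite BtS in IH.
have hx := xpos n.
rewrite -IH. field. lra.
Qed.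

Lemma ident' n :
  INR (cf_qpair alpha n).2 * alpha - INR (cf_ppair alpha n).2 = (-1)^n * Bt alpha n.+1 /\
  INR (cf_qpair alpha n).1 * alpha - INR (cf_ppair alpha n).1 = - (-1)^n * Bt alpha n.
Proof. apply: ident => i _; exact: xpos. Qed.

Lemma det n : INR (cf_qpair alpha n).2 * INR (cf_ppair alpha n).1 -
  INR (cf_qpair alpha n).1 * INR (cf_ppair alpha n).2 = (-1)^n.
Proof.
have [h1 h2] := ident' n. have hI := identI n.
have -> : INR (cf_qpair alpha n).2 * INR (cf_ppair alpha n).1 -
  INR (cf_qpair alpha n).1 * INR (cf_ppair alpha n).2 =
  - (INR (cf_qpair alpha n).2 * (INR (cf_qpair alpha n).1 * alpha - INR (cf_ppair alpha n).1)
   - INR (cf_qpair alpha n).1 * (INR (cf_qpair alpha n).2 * alpha - INR (cf_ppair alpha n).2)) by ring.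
rewrite h1 h2.
transitivity ((-1)^n * (INR (cf_qpair alpha n).2 * Bt alpha n + INR (cf_qpair alpha n).1 * Bt alpha n.+1)); first ring.
rewrite hI; ring.
Qed.

Lemma q_mono n : (1 <= n)%nat -> ((cf_qpair alpha n).1 < (cf_qpair alpha n).2)%nat.
Proof.
case: n => [//|n] _. rewrite q1S q2S.
case: n => [|n].
  have := a1_ge2. rewrite /=. lia.
have := a_ge1 (xpos n.+1). have [_ h] := q_pos n.+1. have := h isT.
have [h' _] := q_pos n.+1. nia.
Qed.

Lemma q_next n : ((cf_qpair alpha n).2 + (cf_qpair alpha n).1 <= (cf_qpair alpha n.+1).2)%nat.
Proof. rewrite q2S. have := a_ge1 (xpos n). nia. Qed.

End CF.

End CFm.
Import CFm.

Module KIm.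
Local Open Scope R_scope.

Lemma KI_core (alpha b c : R) (n m N pk pm p d s : Z) :
 (s = 1 \/ s = -1)%Z ->
 IZR n * alpha - IZR pk = IZR s * b ->
 IZR m * alpha - IZR pm = - IZR s * c ->
 (n*pm - m*pk = s)%Z ->
 IZR n * c + IZR m * b = 1 ->
 0 < b -> b < c ->
 (1 <= m)%Z -> (m < n)%Z -> (n + m <= N)%Z -> (1 <= p)%Z -> (p < n)%Z ->
 IZR p <= Rabs (IZR p * alpha - IZR d) * (IZR N * IZR n - 2 * IZR p).
Proof.
move=> hs hn hm hdet hI hb hbc hm1 hmn hN hp1 hpn.
pose U := (s*(n*d - p*pk))%Z. pose V := (s*(pm*p - m*d))%Z.
have hss : (s * s = 1)%Z by case: hs => ->.
have eU : (U*m + V*n = p)%Z.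
  have -> : (U*m + V*n = s*p*(n*pm - m*pk))%Z by rewrite /U /V; ring.
  rewrite hdet. have -> : (s*p*s = p*(s*s))%Z by ring. rewrite hss; ring.
have eV : (U*pm + V*pk = d)%Z.
  have -> : (U*pm + V*pk = s*d*(n*pm - m*pk))%Z by rewrite /U /V; ring.
  rewrite hdet. have -> : (s*d*s = d*(s*s))%Z by ring. rewrite hss; ring.
clearbody U V.
have eR : IZR p * alpha - IZR d = IZR s * (IZR V * b - IZR U * c).
  rewrite -eU -eV !plus_IZR !mult_IZR.
  have -> : (IZR U * IZR m + IZR V * IZR n) * alpha - (IZR U * IZR pm + IZR V * IZR pk)
    = IZR U * (IZR m * alpha - IZR pm) + IZR V * (IZR n * alpha - IZR pk) by ring.
  rewrite hn hm. ring.
have gE : Rabs (IZR p * alpha - IZR d) = Rabs (IZR V * b - IZR U * c).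
  rewrite eR Rabs_mult. case: hs => ->; rewrite ?Rabs_R1 /=; first ring.
  rewrite Rabs_Ropp Rabs_R1. ring.
rewrite gE.
have hpR : IZR p = IZR U * IZR m + IZR V * IZR n by rewrite -eU plus_IZR !mult_IZR.
have Hn1 : 1 <= IZR n - IZR p by rewrite -minus_IZR; apply: IZR_le; lia.
have Hm1 : 1 <= IZR m by apply: IZR_le.
have Hmn : 1 <= IZR n - IZR m by rewrite -minus_IZR; apply: IZR_le; lia.
have HN : IZR n + IZR m <= IZR N by rewrite -plus_IZR; apply: IZR_le.
have Hp1 : 1 <= IZR p by apply: IZR_le.
have [[hU hV]|[hU hV]] : ((1 <= U)%Z /\ (V <= 0)%Z) \/ ((U <= -1)%Z /\ (1 <= V)%Z).
  case: (Z.lt_total U 0) => [hU|[hU|hU]].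
  - right; split; first lia. case: (Z.le_gt_cases V 0) => hV; last lia.
    exfalso. have : (U*m <= -m)%Z by nia. have : (V*n <= 0)%Z by nia. lia.
  - exfalso. rewrite hU in eU. case: (Z.le_gt_cases V 0) => hV.
    + have : (V*n <= 0)%Z by nia. lia.
    + have : (n <= V*n)%Z by nia. lia.
  - left; split; first lia. case: (Z.le_gt_cases V 0) => hV; first lia.
    exfalso. have : (m <= U*m)%Z by nia. have : (n <= V*n)%Z by nia. lia.
- have hu : 1 <= IZR U by apply: IZR_le.
  have hv : IZR V <= 0 by apply: IZR_le.
  have hvb : IZR V * b <= 0 by nra.
  have huc : 0 < IZR U * c by nra.
  rewrite Rabs_left; last lra.
  set X := IZR N * IZR n - 2 * IZR p.
  have hX : (IZR n + IZR m) * IZR n - 2 * (IZR n - 1) <= X.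
    rewrite /X. nra.
  have hc : 1 < c * (IZR n + IZR m) by nra.
  have hY : IZR m * (IZR n + IZR m) <= (IZR n + IZR m) * IZR n - 2 * (IZR n - 1) by nra.
  have hcX : IZR m <= c * X by nra.
  have hpum : IZR p <= IZR U * IZR m by nra.
  have hX0 : 0 < X by nra.
  have : IZR U * IZR m <= IZR U * (c * X) by nra.
  nra.
- have hu : IZR U <= -1 by apply: IZR_le.
  have hv : 1 <= IZR V by apply: IZR_le.
  rewrite Rabs_right; last nra.
  set X := IZR N * IZR n - 2 * IZR p.
  have hng : IZR n * (IZR V * b - IZR U * c) = - IZR U + b * IZR p.
    rewrite hpR. have -> : IZR n * (IZR V * b - IZR U * c) = IZR V * IZR n * b - IZR U * (IZR n * c) by ring.
    have -> : IZR n * c = 1 - IZR m * b by lra. ring.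
  have hng1 : 1 <= IZR n * (IZR V * b - IZR U * c) by nra.
  have hX : IZR n * IZR p <= X.
    rewrite /X. have : (IZR n + 1) * IZR n <= IZR N * IZR n by nra. nra.
  have hX0 : 0 < X by nra.
  have hn0 : 0 < IZR n by lra.
  have : IZR n * IZR p <= IZR n * ((IZR V * b - IZR U * c) * X) by nra.
  move=> h. apply: (Rmult_le_reg_l (IZR n)); lra.
Qed.

End KIm.
Import KIm.

Module STm.

Set Implicit Arguments.
Unset Strict Implicit.
Unset Printing Implicit Defensive.
Local Open Scope R_scope.

Lemma IntP_spec r z : (IZR z <= r < IZR z + 1) -> Int_part r = z.
Proof.
move=> [h1 h2]. rewrite /Int_part.
have h := tech_up r (z+1). rewrite plus_IZR in h.
rewrite -h; [lia| lra | lra].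
Qed.

Section ST.
Variables rho alpha : R.
Hypothesis a0 : (0 < alpha).
Hypothesis a1 : (alpha < 1).

Definition S a := sturmian true rho alpha a.
Definition F a := Int_part (rho + INR a * alpha).
Definition W a l := [seq S i | i <- iota a l].

Lemma letter a : Z.of_nat (S a) = (F a.+1 - F a)%Z.
Proof.
rewrite /S /sturmian /F S_INR.
set y := (rho + INR a * alpha).
have -> : (rho + (INR a + 1) * alpha = y + alpha) by rewrite /y; ring.
have [h1 h2] := base_Int_part y.
rewrite /frac_part.
case: Rlt_dec => h /=.
  rewrite (@IntP_spec (y + alpha) (Int_part y)); [lia | lra].
rewrite (@IntP_spec (y + alpha) (Int_part y + 1)); [lia | rewrite plus_IZR; lra].
Qed.

Lemma letter01 a : (F a <= F a.+1 <= F a + 1)%Z.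
Proof. have := letter a. case: (S a) => /=; lia. Qed.

Lemma W_cons a l : W a l.+1 = S a :: W a.+1 l.
Proof. by []. Qed.

Lemma W_size a l : size (W a l) = l.
Proof. by rewrite /W size_map size_iota. Qed.

Lemma W_cat a l1 l2 : W a (l1 + l2) = W a l1 ++ W (a + l1) l2.
Proof. by rewrite /W iotaD map_cat. Qed.

Lemma W_mkseq a l : mkseq (fun j => S (a + j)) l = W a l.
Proof. by rewrite /mkseq /W -[in iota a l](addn0 a) iotaDl -map_comp. Qed.

Lemma W_drop t a l : drop t (W a l) = W (a + t) (l - t).
Proof. by rewrite /W -map_drop drop_iota. Qed.

Lemma W_take t a l : (t <= l)%N -> take t (W a l) = W a t.
Proof. move=> h. rewrite /W -map_take take_iota. by rewrite (minn_idPl h). Qed.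

Lemma cntW a l : Z.of_nat (count id (W a l)) = (F (a + l) - F a)%Z.
Proof.
elim: l a => [|l IH] a; first by rewrite addn0 /=; lia.
rewrite W_cons /= Nat2Z.inj_add IH letter addSnnS. lia.
Qed.

End ST.

Lemma cnt_size (s : seq bool) : (count negb s + count id s = size s)%N.
Proof. elim: s => //= x s IH. case: x => /=; lia. Qed.

Lemma flat_props (us : seq (seq bool)) P :
  (forall u, u \in us -> parikh u = P) ->
  (count id (flatten us) = size us * P.2 /\ size (flatten us) = size us * (P.1 + P.2))%N.
Proof.
elim: us => [|u us IH] H; first by [].
have [h1 h2] : (count id (flatten us) = size us * P.2 /\ size (flatten us) = size us * (P.1 + P.2))%N.
  apply: IH => v hv. apply: H. by rewrite inE hv orbT.
have hu := H u (mem_head u us).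
rewrite /= count_cat size_cat h1 h2.
have hs := cnt_size u. move: hu. rewrite /parikh => hu. rewrite -hu /=.
split; lia.
Qed.

Lemma contained_size (u : seq bool) P :
  parikh_contained (parikh u) P -> (size u < P.1 + P.2)%N.
Proof.
rewrite /parikh_contained /parikh /= => [[h1 [h2 h3]]].
rewrite -cnt_size.
case: (ltnP (count negb u + count id u) (P.1 + P.2)) => // h.
exfalso. apply: h3. case: P h1 h2 h => /= x y h1 h2 h. f_equal; lia.
Qed.

Lemma ap_pos w p : abelian_period w p -> (1 <= p)%N.
Proof.
move=> [u0 [us [un [P [_ [_ [_ [h0 [_ ->]]]]]]]]].
have := contained_size h0. lia.
Qed.

Section Fail.
Variables rho alpha : R.
Hypothesis a0 : (0 < alpha).
Hypothesis a1 : (alpha < 1).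

Lemma ap_fail i0 L p : abelian_period (W rho alpha i0 L) p ->
  exists (M : nat) (d : nat), (L <= M * p + 2 * (p - 1))%N /\ (1 <= p)%N /\
    (INR M * Rabs (INR p * alpha - INR d) < 1).
Proof.
move=> [u0 [us [un [P [hne [hw [hus [h0 [hn hp]]]]]]]]].
have ht := contained_size h0. have hr := contained_size hn.
have [hc hs] := flat_props hus.
set t := size u0. set M := size us. set K := size (flatten us).
have hL : (L = t + K + size un)%N.
  have := W_size rho alpha i0 L. rewrite hw !size_cat. lia.
have hflat : flatten us = W rho alpha (i0 + t) K.
  have h1 : drop t (W rho alpha i0 L) = flatten us ++ un by rewrite hw drop_size_cat.
  rewrite W_drop in h1.
  have := congr1 (take K) h1. rewrite take_size_cat // W_take //. lia.
have hcnt := @cntW rho alpha a0 a1 (i0 + t) K.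
rewrite -hflat hc /K hs in hcnt.
exists M, P.2. split; first by rewrite hp; lia. split; first by rewrite hp; lia.
set s := (i0 + t)%N in hcnt.
have [b1 b2] := base_Int_part (rho + INR s * alpha).
have [c1 c2] := base_Int_part (rho + INR (s + M * (P.1 + P.2)) * alpha).
rewrite /F -/M in hcnt.
have e : Int_part (rho + INR (s + M * (P.1 + P.2)) * alpha) =
   (Int_part (rho + INR s * alpha) + Z.of_nat (M * P.2))%Z by lia.
have eM : INR (s + M * (P.1 + P.2)) = INR s + INR M * INR p.
  by rewrite -plusE -multE plus_INR mult_INR hp -plusE plus_INR.
have eZ : IZR (Z.of_nat (M * P.2)) = INR M * INR P.2.
  by rewrite -INR_IZR_INZ -multE mult_INR.
rewrite e plus_IZR eZ eM in c1 c2.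
have hM : (0 <= INR M)%R by apply: pos_INR.
have : (Rabs (INR M * (INR p * alpha - INR P.2)) < 1)%R.
  apply: Rabs_def1; lra.
rewrite Rabs_mult Rabs_right //; lra.
Qed.

End Fail.

End STm.
Import STm.

Set Implicit Arguments.
Unset Strict Implicit.
Unset Printing Implicit Defensive.
Open Scope R_scope.

Lemma sign_pow k : exists s : Z, (s = 1 \/ s = -1)%Z /\ IZR s = (-1)^k.
Proof.
elim: k => [|k [s [hs e]]]; first by exists 1%Z; split; [left|].
exists (- s)%Z. split; first lia. rewrite opp_IZR e /=. ring.
Qed.

Lemma W_flat rho alpha n j M :
  flatten [seq W rho alpha (n * i.+1) n | i <- iota j M] = W rho alpha (n * j.+1) (M * n).
Proof.
elim: M j => [|M IH] j; first by [].
rewrite /= IH mulSn W_cat. do 2 f_equal. rewrite mulnS. lia.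
Qed.

Lemma cnt_le (s : seq bool) : (count id s <= size s)%N.
Proof. exact: count_size. Qed.

Lemma parikhW rho alpha (h0 : 0 < alpha) (h1 : alpha < 1) a l :
  parikh (W rho alpha a l) = (l - count id (W rho alpha a l), count id (W rho alpha a l))%N.
Proof.
rewrite /parikh. have := cnt_size (W rho alpha a l). rewrite W_size => h. f_equal. lia.
Qed.

Theorem proposition5p5 (alpha : R) :
  Rlt 0 alpha -> Rlt alpha (Rdiv 1 2) -> irrational alpha ->
  forall k : nat,
    exists w : seq bool,
      factor_of_slope alpha w /\ min_abelian_period w (cf_q alpha k).
Proof.
move=> h0 h1 hirr k.
have h1' : alpha < 1 by lra.
case: k => [|k].
  exists [:: false]. split.
    exists true, 0, 0%N. split; first lra. split; first lra.
    have e0 : Int_part 0 = 0%Z by apply: (@IntP_spec 0 0%Z); rewrite /=; lra.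
    rewrite /= /mkseq /= /sturmian /=.
    case: Rlt_dec => // h. exfalso. apply: h.
    rewrite Rmult_0_l Rplus_0_l /frac_part e0 /=. lra.
  split.
    exists [::], [:: [:: false]], [::], (1%N, 0%N).
    split; first by []. split; first by [].
    split; first by move=> u; rewrite inE => /eqP ->.
    split; first by rewrite /parikh_contained /=.
    split; first by rewrite /parikh_contained /=.
    by [].
  move=> p' hp'. exact: ap_pos hp'.
set K := k.+1.
have hK : (1 <= K)%N by [].
rewrite /cf_q.
set n := (cf_qpair alpha K).2.
set m := (cf_qpair alpha K).1.
set N := (cf_qpair alpha K.+1).2.
set pk := (cf_ppair alpha K).2.
set pm := (cf_ppair alpha K).1.
set b := Bt alpha K.+1.
set c := Bt alpha K.
have [hid1 hid2] := ident' h0 h1 hirr K.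
have hI := identI h0 h1 hirr K.
have hdet := det h0 h1 hirr K.
have [_ hm1] := q_pos h0 h1 K. have hm1' := hm1 hK.
have hmn := q_mono h0 h1 hirr hK.
have hnext := q_next h0 h1 hirr K.
have hb := Bt_pos h0 h1 hirr K.+1.
have hbc := Bt_dec h0 h1 hirr K.
have [s [hs es]] := sign_pow K.
rewrite -/n -/m -/pk -/pm -/b -/c in hid1 hid2 hI hdet hmn hm1' hnext hb hbc.
rewrite -/N in hnext.
have hNb : INR N * b < 1.
  have hI2 := identI h0 h1 hirr K.+1.
  rewrite -/N -/b q1S -/n in hI2.
  have : 0 < INR n * Bt alpha K.+2.
    apply: Rmult_lt_0_compat; last exact: Bt_pos.
    apply: lt_0_INR. lia.
  lra.
set delta := INR n * alpha - INR pk.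
have hdel : Rabs delta = b.
  rewrite /delta hid1 -es Rabs_mult. have hb0 : b >= 0 by lra.
  rewrite (Rabs_right b hb0).
  case: hs => ->.
    have h10 : (1 >= 0) by lra. rewrite (Rabs_right 1 h10). lra.
  have h10 : (-1 < 0) by lra. rewrite (Rabs_left (-1) h10). lra.
set rho := if Rle_dec 0 delta then 0 else - INR N * delta.
have hrj : forall j, (j <= N)%N -> 0 <= rho + INR j * delta < 1.
  move=> j hj. have hjN : INR j <= INR N by apply: le_INR; lia.
  have hj0 : 0 <= INR j by apply: pos_INR.
  rewrite /rho. case: Rle_dec => hd /=.
    have e : delta = b by rewrite -hdel Rabs_right; lra.
    rewrite e. have : INR j * b <= INR N * b by nra. nra.
  have e : delta = - b by rewrite -hdel Rabs_left; lra.
  rewrite e. have : INR j * b <= INR N * b by nra. nra.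
have hr0 : 0 <= rho < 1.
  have := hrj 0%N (leq0n _). rewrite /=. lra.
have hF : forall j, (j <= N)%N -> F rho alpha (j * n) = Z.of_nat (j * pk).
  move=> j hj. rewrite /F. apply: IntP_spec.
  rewrite -INR_IZR_INZ.
  have -> : rho + INR (j * n) * alpha = INR (j * pk) + (rho + INR j * delta).
    rewrite /delta !INR_muln. ring.
  have := hrj j hj. lra.
have hF0 : F rho alpha 0 = 0%Z by have := hF 0%N (leq0n _); rewrite mul0n.
have hN3 : (3 <= N)%N by lia.
set L := (N * n - 2)%N.
exists (W rho alpha 1 L). split.
  exists true, rho, 1%N. split; first lra. split; first lra.
  rewrite W_size. symmetry. exact: W_mkseq.
split.
-
  have hn1 : (1 <= n)%N by lia.
  have hblk : forall i, (i < N - 2)%N -> count id (W rho alpha (n * i.+1) n) = pk.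
    move=> i hi. have := cntW rho h0 h1' (n * i.+1) n.
    have -> : (n * i.+1 + n = i.+2 * n)%N by nia.
    have -> : (n * i.+1 = i.+1 * n)%N by nia.
    rewrite hF; last lia. rewrite hF; last lia. lia.
  have hpkn : (pk <= n)%N.
    have := cnt_le (W rho alpha (n * 1) n). rewrite hblk ?W_size //. lia.
  have hu0 : (pk <= (count id (W rho alpha 1 (n-1))).+1 /\ count id (W rho alpha 1 (n-1)) <= pk)%N.
    have := cntW rho h0 h1' 1 (n-1).
    have -> : (1 + (n - 1) = 1 * n)%N by lia.
    rewrite hF; last lia. have := letter01 rho h0 h1' 0. rewrite hF0. lia.
  have hun : (pk <= (count id (W rho alpha ((N-1)*n) (n-1))).+1 /\ count id (W rho alpha ((N-1)*n) (n-1)) <= pk)%N.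
    have := cntW rho h0 h1' ((N-1)*n) (n-1).
    have := letter01 rho h0 h1' ((N-1)*n + (n-1)).
    have -> : (((N-1)*n + (n-1)).+1 = N * n)%N by nia.
    rewrite hF; last lia. rewrite hF; last lia. nia.
  have hc0 := @cnt_le (W rho alpha 1 (n-1)). rewrite W_size in hc0.
  have hcN := @cnt_le (W rho alpha ((N-1)*n) (n-1)). rewrite W_size in hcN.
  rewrite /abelian_period. exists (W rho alpha 1 (n-1)), [seq W rho alpha (n * i.+1) n | i <- iota 0 (N-2)],
    (W rho alpha ((N-1)*n) (n-1)), ((n - pk)%N, pk).
  split.
    have -> : (N - 2 = (N - 3).+1)%N by lia. by [].
  split.
    rewrite W_flat.
    have eL : L = ((n-1) + ((N-2)*n + (n-1)))%N by rewrite /L; nia.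
    have e1 : (1 + (n - 1) = n * 1)%N by lia.
    have e2 : (n * 1 + (N - 2) * n = (N - 1) * n)%N by nia.
    by rewrite eL W_cat e1 W_cat e2.
  split.
    move=> u /mapP [i hi ->]. rewrite mem_iota in hi.
    rewrite parikhW // hblk //; lia.
  split.
    rewrite parikhW // /parikh_contained /=. split; first lia. split; first lia.
    case => h. lia.
  split.
    rewrite parikhW // /parikh_contained /=. split; first lia. split; first lia.
    case => h. lia.
  rewrite /=. lia.
- move=> p' hp'.
  have hp1 := ap_pos hp'.
  case: (leqP n p') => // hlt. exfalso.
  have [M [d [hL [_ hMg]]]] := ap_fail h0 h1' hp'.
  have hKI := @KI_core alpha b c (Z.of_nat n) (Z.of_nat m) (Z.of_nat N) (Z.of_nat pk) (Z.of_nat pm)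
     (Z.of_nat p') (Z.of_nat d) s hs.
  rewrite -!INR_IZR_INZ in hKI.
  have hdetZ : (Z.of_nat n * Z.of_nat pm - Z.of_nat m * Z.of_nat pk = s)%Z.
    apply: eq_IZR. by rewrite minus_IZR !mult_IZR -!INR_IZR_INZ es.
  have := hKI ltac:(rewrite es; exact: hid1) ltac:(rewrite es; exact: hid2) hdetZ hI hb hbc
    ltac:(lia) ltac:(lia) ltac:(lia) ltac:(lia) ltac:(lia).
  set g := Rabs (INR p' * alpha - INR d).
  rewrite -/g in hMg.
  have hg : 0 <= g by apply: Rabs_pos.
  have hNn : (N * n <= M * p' + p' + p')%N.
    move: hL. rewrite /L. nia.
  have hNnR : INR N * INR n <= INR M * INR p' + 2 * INR p'.
    have e2 : INR 2 = 2 by rewrite /=; ring.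
    have hh : (N * n <= M * p' + p' + p')%coq_nat by apply/leP.
    have g1 := le_INR (N * n)%coq_nat (M * p' + p' + p')%coq_nat hh.
    have g2 := mult_INR N n.
    have g3 : INR (M * p' + p' + p')%coq_nat = INR M * INR p' + INR p' + INR p'
      by rewrite !plus_INR mult_INR.
    lra.
  have hpR : 1 <= INR p'.
    have hh : (1 <= p')%coq_nat by apply/leP.
    have := le_INR 1 p' hh. rewrite /=. lra.
  move=> hk.
  have h3 : g * (INR N * INR n - 2 * INR p') <= g * (INR M * INR p') by nra.
  have h4 : g * (INR M * INR p') < INR p'.
    have -> : g * (INR M * INR p') = (INR M * g) * INR p' by ring.
    nra.
  lra.
Qed.
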